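(* Let $H$ be a digraph (possibly with loops) and let $D$ be an $H$-colored tournament. Then for every $k \geq 3$, $D$ has a $(k,H)$-kernel.
   Context: All digraphs are finite. A tournament is a digraph in which every two distinct vertices are joined by exactly one arc (no loops, no symmetric arcs). $D$ comes with a map $\rho: A(D)\to V(H)$. For a walk $W=(x_0,\ldots,x_n)$ in $D$, there is an obstruction on $x_i$ if $(\rho(x_{i-1},x_i),\rho(x_i,x_{i+1})) \notin A(H)$; for an open walk this is considered at internal vertices $x_i$, $1\le i\le n-1$, for a closed walk at all $i\in\{0,\ldots,n-1\}$ with indices modulo $n$. $O_H(W)$ is the set of indices with an obstruction; the $H$-length is $l_H(W)=|O_H(W)|+1$ for open $W$ and $|O_H(W)|$ for closed $W$. A $(k,H)$-kernel ($k\ge2$) is a set $S\subseteq V(D)$ such that for every two distinct $u,v\in S$ every directed $uv$-path in $D$ has $H$-length at least $k$, and for every $x\in V(D)\setminus S$ there is a directed path from $x$ to a vertex of $S$ of $H$-length at most $k-1$. *)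

(* Defs.v *)
From mathcomp Require Import all_boot.
Set Implicit Arguments. Unset Strict Implicit. Unset Printing Implicit Defensive.

Definition tournament (T : finType) (E : rel T) : Prop :=
  (forall x, ~~ E x x) /\
  (forall u v, E u v -> ~~ E v u) /\
  (forall u v, u != v -> E u v || E v u).

Definition dipath (T : finType) (E : rel T) (u v : T) (p : seq T) : bool :=
  [&& path E u p, uniq (u :: p) & last u p == v].

Definition arc_colors (T : finType) (HV : Type) (rho : T -> T -> HV)
  (u : T) (p : seq T) : seq HV := pairmap rho u p.

(* Number of obstructions of the open walk u :: p: internal vertices x_i with
   (rho(x_{i-1},x_i), rho(x_i,x_{i+1})) not an arc of H. *)
Definition obstructions (T : finType) (HV : finType) (hA : rel HV)
  (rho : T -> T -> HV) (u : T) (p : seq T) : nat :=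
  match arc_colors rho u p with
  | [::] => 0
  | c :: cs => count id (pairmap (fun a b => ~~ hA a b) c cs)
  end.

Definition Hlength (T : finType) (HV : finType) (hA : rel HV)
  (rho : T -> T -> HV) (u : T) (p : seq T) : nat :=
  (obstructions hA rho u p).+1.

Definition kH_kernel (T : finType) (E : rel T) (HV : finType) (hA : rel HV)
  (rho : T -> T -> HV) (k : nat) (S : {set T}) : Prop :=
  (forall u v, u \in S -> v \in S -> u != v ->
     forall p, dipath E u v p -> k <= Hlength hA rho u p) /\
  (forall x, x \notin S ->
     exists v p, [/\ v \in S, dipath E x v p & Hlength hA rho x p <= k - 1]).

(* Main.v *)
Require Import Defs.
From mathcomp Require Import all_boot.

Theorem corollary8 (HV : finType) (hA : rel HV) (T : finType) (E : rel T)
  (rho : T -> T -> HV) :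
  tournament E ->
  forall k : nat, 3 <= k -> exists S : {set T}, kH_kernel E hA rho k S.
Proof.
move=> [Eirr [Easym Etot]] k hk.
case: (pickP (fun _ : T => true)) => [v0 _|T0]; last first.
  exists set0; split; first by move=> u; rewrite inE.
  by move=> x; have := T0 x.
pose indeg v := #|[set y | E y v]|.
case: (arg_maxnP indeg (erefl true : predT v0)) => v _ Hmax.
exists [set v]; split.
  by move=> u w; rewrite !inE => /eqP -> /eqP ->; rewrite eqxx.
move=> x; rewrite inE => xv.
case Exv: (E x v).
  exists v, [:: v]; split; first by rewrite inE.
    rewrite /dipath /= Exv eqxx /= !inE !andbT. exact: xv.
  by rewrite subn_gt0 (ltn_trans _ hk).
have Evx : E v x by have := Etot x v xv; rewrite Exv.
have [y /andP [Exy Eyv]] : exists y, E x y && E y v.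
  case: (boolP [exists y, E x y && E y v]) => [/existsP //|/existsPn H]; exfalso.
  have sub : [set y | E y v] \proper [set y | E y x].
    apply/properP; split.
      apply/subsetP => y; rewrite !inE => Eyv.
      have yx : y != x by apply/eqP => e; rewrite e Exv in Eyv.
      have := Etot y x yx; have := H y; rewrite Eyv andbT => /negbTE ->; by rewrite orbF.
    by exists v; rewrite !inE ?Evx ?(negbTE (Eirr v)).
  have := proper_card sub; have := Hmax x isT; rewrite /indeg.
  by move=> a b; have := leq_ltn_trans a b; rewrite ltnn.
exists v, [:: y; v]; split; first by rewrite inE.
  rewrite /dipath /= Exy Eyv eqxx !inE !andbT.
  have yv : y != v by apply/eqP => e; rewrite e (negbTE (Eirr v)) in Eyv.
  have xy : x != y by apply/eqP => e; rewrite e (negbTE (Eirr y)) in Exy.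
  by rewrite (negbTE xy) (negbTE xv) yv.
rewrite /Hlength /obstructions /=.
case: k hk => // [[|[|k]]] // _; rewrite subSS /=.
by case: (hA _ _).
Qed.
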